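(* Let $p$ be a prime and $n\ge 2$ an integer. Let $M$ be the $(n-1)\times(n-1)$ matrix, with rows and columns indexed by $1,\dots,n-1$ (index $i$ corresponding to the vertex $[p^i]$ of $\Gamma_E[\mathbb{Z}_{p^n}]$), defined by $M_{ij}=1$ if $i+j\ge n$ and $M_{ij}=0$ otherwise. Then the characteristic polynomial of $M$ is $$\det(\lambda I-M)=\sum_{k=0}^{n-1}(-1)^{\lfloor (k+1)/2\rfloor}\, b_k\,\lambda^{\,n-1-k},\qquad b_k=\binom{p_k}{k},\quad p_k=\Big\lfloor \frac{n-1+k}{2}\Big\rfloor .$$ That is, $\det(\lambda I-M)=\lambda^{n-1}-b_1\lambda^{n-2}-b_2\lambda^{n-3}+b_3\lambda^{n-4}+b_4\lambda^{n-5}-\cdots$, with the signs following the pattern $+,-,-,+,+,-,-,\dots$. For example, for $n=6$ it equals $\lambda^5-3\lambda^4-3\lambda^3+4\lambda^2+\lambda-1$.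
   Context: For a commutative ring $R$ with identity, define $x\sim y$ iff $\operatorname{ann}_R(x)=\operatorname{ann}_R(y)$. The compressed zero-divisor graph $\Gamma_E[R]$ has as vertices the equivalence classes $[x]$ of nonzero zero divisors (i.e. excluding $[0]$ and $[1]$), with two distinct classes $[x],[y]$ adjacent iff $xy=0$. For $R=\mathbb{Z}_{p^n}$ ($p$ prime) the vertices are exactly $[p],[p^2],\dots,[p^{n-1}]$, and $[p^i]\cdot[p^j]=0$ iff $i+j\ge n$. The matrix $M$ in the claim is the paper's ''adjacency matrix'' of $\Gamma_E[\mathbb{Z}_{p^n}]$: it records $[p^i][p^j]=0$ including diagonal entries (so $M_{ii}=1$ exactly when $2i\ge n$). $\lfloor\cdot\rfloor$ denotes the floor function. *)

(* Defs.v *)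
From HB Require Import structures.
From mathcomp Require Import all_boot all_order all_algebra.
Set Implicit Arguments. Unset Strict Implicit. Unset Printing Implicit Defensive.
Import GRing.Theory.
Local Open Scope ring_scope.

(* Adjacency matrix of the compressed zero-divisor graph of Z_{p^n}:
   row/column index i : 'I_(n-1) corresponds to vertex [p^(i+1)],
   entry is 1 iff (i+1)+(j+1) >= n, i.e. p^(i+1) * p^(j+1) = 0 in Z_{p^n}. *)
Definition zdg_adj (n : nat) : 'M[int]_(n.-1) :=
  \matrix_(i < n.-1, j < n.-1) (if (n <= i.+1 + j.+1)%N then 1 else 0).

Definition zdg_charpoly (n : nat) : {poly int} :=
  \sum_(k < n) ((-1) ^+ (k.+1)./2 * ('C((n.-1 + k)./2, k))%:R) *: 'X^(n.-1 - k).

(* Main.v *)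
Require Import Defs.
From HB Require Import structures.
From mathcomp Require Import all_boot all_order all_algebra.
From mathcomp Require Import zify ring.
Set Implicit Arguments. Unset Strict Implicit. Unset Printing Implicit Defensive.
Import GRing.Theory.
Local Open Scope ring_scope.

Section Gen.
Variable R : comNzRingType.

Definition Km (m : nat) (x : R) : 'M[R]_m :=
  \matrix_(i < m, j < m) ((if i == j :> nat then x else 0)
     - (if j == i.+1 :> nat then x else 0) - (if (i + j == m.-1)%N then 1 else 0)).

Definition dK m x := \det (Km m x).

Lemma dK0 x : dK 0 x = 1. Proof. exact: det_mx00. Qed.
Lemma dK1 x : dK 1 x = x - 1.
Proof. by rewrite /dK det_mx11 !mxE /= subr0. Qed.

Lemma Km_col0 s x : row' ord_max (col' ord0 (Km s.+2 x)) = (Km s.+1 (-x))^T.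
Proof.
apply/matrixP => i j; rewrite !mxE /= /bump leqNgt (ltn_ord i) /= add0n add1n.
rewrite eqSS addnS eqSS addnC (eq_sym (j : nat)).
case: (i == j :> nat); case: (i == j.+1 :> nat); case: (_ == s)%N; ring.
Qed.

Lemma eqS_pred a s : (0 < s)%N -> (a.+1 == s) = (a == s.-1).
Proof. by case: s. Qed.

Lemma Km_L s x : row' ord0 (col' ord0 (row' ord_max (col' ord_max (Km s.+2 x)))) = Km s x.
Proof.
apply/matrixP => i j; rewrite !mxE /= /bump !leq0n !add1n.
have hi : (i < s)%N := ltn_ord i. have hj : (j < s)%N := ltn_ord j.
rewrite !ltnS !(leqNgt s) hi hj !add0n !addSn !addnS !eqSS.
by rewrite eqS_pred // (leq_ltn_trans (leq0n i) hi).
Qed.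

Lemma detL s x : \det (row' ord_max (col' ord_max (Km s.+2 x))) = x * \det (Km s x).
Proof.
rewrite (expand_det_col _ ord0) (bigD1 ord0) //= big1 ?addr0; last first.
  move=> i i0; move: i0; rewrite -!val_eqE /= => i0.
  rewrite !mxE /=.
  have bi : bump s.+1 i = i by rewrite /bump leqNgt (ltn_ord i).
  have b0 : bump s.+1 0 = 0%N by [].
  rewrite bi b0 addn0 (negbTE i0) (ltn_eqF (ltn_ord i)); ring.
rewrite /cofactor Km_L !mxE /= addn0 expr0; ring.
Qed.

Lemma dK_rec s x : dK s.+2 x = x * (x * dK s x) + (-1) ^+ s * dK s.+1 (-x).
Proof.
rewrite /dK (expand_det_row _ ord_max) (bigD1 ord0) //= (bigD1 ord_max) //= big1 ?addr0; last first.
  move=> j /andP[j0 jm]; move: j0 jm; rewrite -!val_eqE /= => j0 jm.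
  have jl := ltn_ord j.
  have hm : ((ord_max : 'I_s.+2) : nat) = s.+1 by [].
  rewrite mxE hm; do 3 case: eqP => ?; try lia.
  by rewrite !subr0 mul0r.
have e1 : Km s.+2 x ord_max ord0 = -1.
  rewrite mxE; have hm : ((ord_max : 'I_s.+2) : nat) = s.+1 by [].
  rewrite hm /= addn0 eqxx; ring.
have e2 : Km s.+2 x ord_max ord_max = x.
  rewrite mxE; have hm : ((ord_max : 'I_s.+2) : nat) = s.+1 by [].
  rewrite hm eqxx; do 2 case: eqP => ?; try lia; ring.
rewrite e1 e2 /cofactor Km_col0 det_tr.
rewrite detL.
have -> : (-1) ^+ (s.+1 + s.+1) = 1 :> R by rewrite -signr_odd oddD addbb.
rewrite addn0 exprS; ring.
Qed.

Definition cF (m k : nat) : R := (-1) ^+ (k.+1)./2 * ('C((m + k)./2, k))%:R.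
Definition F m (x : R) := \sum_(k < m.+1) cF m k * x ^+ (m - k).

Lemma sgE a b : (a %% 2 = b %% 2)%N -> (-1) ^+ a = (-1) ^+ b :> R.
Proof. by rewrite -(signr_odd _ a) -(signr_odd _ b) -!modn2 => ->. Qed.

Lemma F0 x : F 0 x = 1.
Proof. by rewrite /F big_ord1 /cF /= expr0 mulr1 mul1r. Qed.

Lemma F1 x : F 1 x = x - 1.
Proof. rewrite /F !big_ord_recr big_ord0 /cF /= bin0 binn subn0 subnn expr0 expr1; ring. Qed.

Lemma cF0 m : cF m 0 = 1.
Proof. by rewrite /cF bin0 /= expr0 mul1r. Qed.

Lemma F_rec s x : F s.+2 x = x * (x * F s x) + (-1) ^+ s * F s.+1 (-x).
Proof.
have L : F s.+2 x = x^+(s.+2) + \sum_(k < s.+2) cF s.+2 k.+1 * x^+(s.+1 - k).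
  by rewrite /F big_ord_recl cF0 subn0 mul1r; congr (_ + _).
have B : x*(x*F s x) = x^+(s.+2) + \sum_(k < s.+2) cF s k.+1 * x ^+ (s-k.+1) * x * x.
  rewrite /F mulr_sumr mulr_sumr big_ord_recl cF0 subn0 mul1r -!exprS; congr (_ + _).
  rewrite !big_ord_recr /= /cF !bin_small ?mulr0 ?mul0r ?addr0.
  - by apply: eq_bigr => k _; rewrite /bump leq0n add1n; ring.
  - by rewrite -divn2; lia.
  - by rewrite -divn2; lia.
have C : (-1)^+s * F s.+1 (-x) = \sum_(k < s.+2) (-1)^+s * (cF s.+1 k * (-x)^+(s.+1-k)).
  by rewrite /F mulr_sumr.
rewrite L B C -addrA -big_split; congr (_ + _); apply eq_bigr => k _ /=.
have hk := ltn_ord k.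
rewrite /cF.
have -> : (s.+2 + k.+1)./2 = ((s + k.+1)./2).+1 by rewrite !addSn.
rewrite binS natrD -addSnnS (exprNn x).
have hs : (-1) ^+ s * (-1) ^+ ((k.+1)./2) * (-1) ^+ (s.+1 - k) = (-1) ^+ ((k.+2)./2) :> R.
  rewrite -!exprD; apply: sgE; rewrite -!divn2; lia.
case: (ltnP k s) => hks.
- have -> : x ^+ (s.+1 - k) = x ^+ (s - k.+1) * x * x by rewrite -!exprSr; congr (_ ^+ _); lia.
  rewrite -hs; ring.
- rewrite (bin_small (_ : (s.+1 + k)./2 < k.+1)%N); last by rewrite -divn2; lia.
  rewrite -hs; ring.
Qed.
Lemma dK_F m x : dK m x = F m x.
Proof.
suff H : forall k, (forall y, dK k y = F k y) /\ (forall y, dK k.+1 y = F k.+1 y) by case: (H m).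
elim => [|k [IH1 IH2]]; first by split=> y; rewrite ?dK0 ?F0 ?dK1 ?F1.
by split=> // y; rewrite dK_rec F_rec IH1 IH2.
Qed.

Lemma sum_delta n (f : 'I_n -> R) (j : 'I_n) :
  \sum_k f k * (k == j :> nat)%:R = f j.
Proof.
rewrite (bigD1 j) //= eqxx mulr1 big1 ?addr0 // => k /negbTE.
by rewrite -val_eqE /= => ->; rewrite mulr0.
Qed.

Lemma sum_delta1 n (f : 'I_n.+1 -> R) (j : 'I_n.+1) :
  \sum_k f k * (j == k.+1 :> nat)%:R = if (j == 0 :> nat) then 0 else f (inord j.-1).
Proof.
case: eqP => [j0|j0].
  by rewrite big1 // => k _; rewrite j0 mulr0.
rewrite (bigD1 (inord j.-1)) //= inordK; last by have := ltn_ord j; lia.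
rewrite prednK; last by lia.
rewrite eqxx mulr1 big1 ?addr0 // => k /negbTE; rewrite -val_eqE /= inordK; last by have := ltn_ord j; lia.
by move=> h; case: eqP => [e|]; [rewrite e /= eqxx in h|rewrite mulr0].
Qed.
End Gen.

Lemma charpoly_F n : zdg_charpoly n.+1 = F n 'X.
Proof.
rewrite /zdg_charpoly /F; apply: eq_bigr => k _.
by rewrite /cF -mul_polyC rmorphM rmorphXn rmorphN1 rmorph_nat.
Qed.

Lemma charpoly_dK m : char_poly (zdg_adj m.+2) = dK m.+1 'X.
Proof.
pose B : 'M[{poly int}]_(m.+1) := \matrix_(i, j) ((i == j :> nat)%:R - (j == i.+1 :> nat)%:R).
have dB : \det B = 1.
  rewrite -det_tr det_trig.
    by apply: big1 => i _; rewrite !mxE eqxx (ltn_eqF (ltnSn i)) subr0.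
  apply/is_trig_mxP => i j lt; rewrite !mxE.
  by rewrite (gtn_eqF lt) (ltn_eqF (ltn_trans lt (ltnSn j))) subr0.
have E : char_poly_mx (zdg_adj m.+2) *m B = Km m.+1 'X.
  apply/matrixP => i j; rewrite !mxE.
  under eq_bigr => k _ do rewrite !mxE.
  rewrite (eq_bigr (fun k => ('X *+ (i == k) - (zdg_adj m.+2 i k)%:P) * (k == j :> nat)%:R
     - ('X *+ (i == k) - (zdg_adj m.+2 i k)%:P) * (j == k.+1 :> nat)%:R)); last by move=> k _; rewrite !mxE mulrBr.
  rewrite sumrB sum_delta sum_delta1 /zdg_adj !mxE -!val_eqE /=.
  have hj := ltn_ord j. case: i => [i hi] /=.
  have [j0|j0] := eqVneq (j : nat) 0%N.
    { rewrite j0.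
    do ![case: eqP => ? | case: ltnP => ?]; try lia.
    all: rewrite ?mulr1n ?mulr0n ?polyC1 ?polyC0.
    all: ring. }
  rewrite inordK; last lia.
  do ![case: eqP => ? | case: ltnP => ?]; try lia.
  all: rewrite ?mulr1n ?mulr0n ?polyC1 ?polyC0.
  all: try ring.
by rewrite /char_poly -[\det _]mulr1 -dB -det_mulmx E.
Qed.

Theorem theorem3p1 (p n : nat) (hp : prime p) (hn : (2 <= n)%N) :
  char_poly (zdg_adj n) = zdg_charpoly n.
Proof.
case: n hn => [|[|m]] // _.
by rewrite charpoly_dK charpoly_F dK_F.
Qed.
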